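(* Consider problem (P2) without the short-term power constraint, i.e., maximize $\mathbb{E}[R_\nu(P_\nu,\rho_\nu)]$ over policy pairs with $P_\nu\ge0$, $0\le\rho_\nu\le1$, subject to $\mathbb{E}[Q^{\rm NL}_\nu(P_\nu,\rho_\nu)]\ge Q$ and $\mathbb{E}[P_\nu]\le P_{\rm avg}$ (with $Q$ feasible). Given $\lambda,\mu>0$, let $Z(x)=\frac{1-\Omega}{P_sTax}$, $x_1=\frac{4\mu(1-\Omega)}{\lambda P_sTa}$, $x_2=\frac{\mu}{\lambda\Omega P_sTa}$ (so $x_2>x_1$), and for $h_\nu\ge x_1$ let $P^A_{{\rm o},\nu}=\frac1{h_\nu}\Big(-\frac1a\ln\Big(\frac{2}{1+\sqrt{1-4\mu Z(h_\nu)/\lambda}}-1\Big)+b\Big)$. Define $P'_{{\rm ID},\nu}=\max\{1/\mu-\sigma^2/h_\nu,0\}$ and $P'_{{\rm EH},\nu}=0$ if $h_\nu\le x_1$; $P'_{{\rm EH},\nu}=P^A_{{\rm o},\nu}$ if $x_1<h_\nu<x_2$ and $\lambda Q^{\rm NL}_\nu(P^A_{{\rm o},\nu},1)>\mu P^A_{{\rm o},\nu}$, and $0$ if $x_1<h_\nu<x_2$ otherwise; $P'_{{\rm EH},\nu}=P^A_{{\rm o},\nu}$ if $h_\nu\ge x_2$. Set $P_\nu=P'_{{\rm ID},\nu}+P'_{{\rm EH},\nu}$ and $\rho_\nu=0$ if $P_\nu=0$, $\rho_\nu=P'_{{\rm EH},\nu}/P_\nu$ otherwise. If $\lambda=\lambda^{\rm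 NL}>0$, $\mu=\mu^{\rm NL}>0$ are such that $\mathbb{E}[Q^{\rm NL}_\nu(P_\nu,\rho_\nu)]=Q$ and $\mathbb{E}[P_\nu]=P_{\rm avg}$, then $(P_\nu,\rho_\nu)$ is an optimal solution of this problem.
   Context: Standing model: constants $a,b,P_s,T,\sigma^2>0$ are fixed and $\Omega=1/(1+e^{ab})$. Fading is modeled on a probability space carrying independent random variables $h$ (channel power gain, values in $(0,\infty)$, $\mathbb{E}[h]<\infty$) and $U$ (uniform on $[0,1]$). A fading state is $\nu=(h_\nu,U_\nu)$, distributed as $(h,U)$; $\mathbb{E}$ is expectation over the fading state. A policy is a Borel measurable function of the fading state. For a fading state with gain $h_\nu$, transmit power $p\ge0$ and power-splitting ratio $\rho\in[0,1]$: $R_\nu(p,\rho)=\ln\big(1+(1-\rho)h_\nu p/\sigma^2\big)$ (rate, in nats); $\Psi_\nu(p,\rho)=1/(1+e^{-a(\rho h_\nu p-b)})$; $Q^{\rm NL}_\nu(p,\rho)=P_sT(\Psi_\nu(p,\rho)-\Omega)/(1-\Omega)$ (harvested energy). $P_{\rm avg}>0$ is the average power limit and $Q\ge0$ the average energy threshold. *)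

(* Defs.v *)
From HB Require Import structures.
From mathcomp Require Import all_boot all_order all_algebra.
From mathcomp Require Import all_classical all_reals all_analysis.
Set Implicit Arguments. Unset Strict Implicit. Unset Printing Implicit Defensive.
Import Order.TTheory GRing.Theory Num.Theory.
Import numFieldNormedType.Exports.
Local Open Scope classical_set_scope.
Local Open Scope ring_scope.

Section model.
Context {R : realType}.

Definition Omg (a b : R) : R := (1 + expR (a * b))^-1.

(* R_nu(p,rho) = ln(1 + (1-rho) h p / sigma^2)  (nats) *)
Definition rate (sigma2 h p rho : R) : R := ln (1 + (1 - rho) * h * p / sigma2).

Definition Psi (a b h p rho : R) : R := (1 + expR (- (a * (rho * h * p - b))))^-1.

Definition QNL (a b Ps T h p rho : R) : R :=
  Ps * T * (Psi a b h p rho - Omg a b) / (1 - Omg a b).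

(* the candidate policy, as a function of the channel gain x = h_nu *)
Definition Zf (a b Ps T x : R) : R := (1 - Omg a b) / (Ps * T * a * x).
Definition x1 (a b Ps T lam mu : R) : R := 4 * mu * (1 - Omg a b) / (lam * Ps * T * a).
Definition x2 (a b Ps T lam mu : R) : R := mu / (lam * Omg a b * Ps * T * a).
Definition PA (a b Ps T lam mu x : R) : R :=
  x^-1 * (- a^-1 * ln (2 / (1 + Num.sqrt (1 - 4 * mu * Zf a b Ps T x / lam)) - 1) + b).
Definition PID (sigma2 mu x : R) : R := Num.max (mu^-1 - sigma2 / x) 0.
Definition PEH (a b Ps T lam mu x : R) : R :=
  if x <= x1 a b Ps T lam mu then 0
  else if x < x2 a b Ps T lam mu then
    (if mu * PA a b Ps T lam mu x < lam * QNL a b Ps T x (PA a b Ps T lam mu x) 1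
     then PA a b Ps T lam mu x else 0)
  else PA a b Ps T lam mu x.
Definition Pcand (a b Ps T sigma2 lam mu x : R) : R :=
  PID sigma2 mu x + PEH a b Ps T lam mu x.
Definition rhocand (a b Ps T sigma2 lam mu x : R) : R :=
  if Pcand a b Ps T sigma2 lam mu x == 0 then 0
  else PEH a b Ps T lam mu x / Pcand a b Ps T sigma2 lam mu x.

Context {d : measure_display} {Ox : measurableType d}.

Definition indep_rv (P : probability Ox R) (X Y : Ox -> R) : Prop :=
  forall A B : set R, measurable A -> measurable B ->
    P (X @^-1` A `&` Y @^-1` B) = (P (X @^-1` A) * P (Y @^-1` B))%E.

Definition uniform01 (P : probability Ox R) (U : Ox -> R) : Prop :=
  forall A : set R, measurable A ->
    P (U @^-1` A) = (@lebesgue_measure R) (A `&` `[0, 1]%classic).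

Definition fading_model (P : probability Ox R) (h U : Ox -> R) : Prop :=
  [/\ measurable_fun setT h, measurable_fun setT U, (forall w, 0 < h w),
      P.-integrable setT (EFin \o h) & (indep_rv P h U /\ uniform01 P U)].

(* expectation over the fading state nu = (h, U) of f(nu) *)
Definition Efad (P : probability Ox R) (h U : Ox -> R) (f : R * R -> R) : \bar R :=
  (\int[P]_w (f (h w, U w))%:E)%E.

Definition feasible (a b Ps T Pavg Q : R) (P : probability Ox R) (h U : Ox -> R)
    (p rho : R * R -> R) : Prop :=
  [/\ measurable_fun setT p /\ measurable_fun setT rho,
      (forall w, 0 <= p (h w, U w)),
      (forall w, 0 <= rho (h w, U w) <= 1),
      (Q%:E <= Efad P h U (fun s => QNL a b Ps T s.1 (p s) (rho s)))%E &
      (Efad P h U p <= Pavg%:E)%E].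

End model.

(* Main.v *)
Require Import Defs.
From HB Require Import structures.
From mathcomp Require Import all_boot all_order all_algebra.
From mathcomp Require Import all_classical all_reals all_analysis.
From mathcomp Require Import ring lra measurable_realfun.
Import Order.TTheory GRing.Theory Num.Theory.
Import numFieldNormedType.Exports.
Local Open Scope classical_set_scope.
Local Open Scope ring_scope.
Section S.
Context {R : realType}.
Definition sg (t : R) : R := (1 + expR (- t))^-1.
Definition phi (m t : R) : R := sg t - m * t.

Lemma sg_derive (t : R) : is_derive t 1 sg (sg t * (1 - sg t)).
Proof.
have h1 : 1 + expR (- t) != 0 by rewrite gt_eqF // ltr_pwDl // expR_gt0.
have dN : is_derive t 1 (fun y : R => - y) (-1) := is_deriveNid t 1.
have dE : is_derive t 1 (expR \o (fun y : R => - y)) (expR (- t) * -1).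
  exact: is_derive1_comp.
have dD := is_deriveD (is_derive_cst (1:R) t 1) dE.
have dV := @is_deriveV R (cst 1 + (expR \o (fun y : R => - y))) t _ _ h1 dD.
have -> : sg = (fun y => ((cst 1 + expR \o (fun y : R => - y)) y)^-1) by [].
apply: is_derive_eq dV _.
rewrite /sg /=.
have := h1.
set e := expR (- t) => he.
rewrite /GRing.scale /=.
change (- (1 + e) ^- 2 * (0 + e * -1) = (1+e)^-1 * (1 - (1+e)^-1)).
field. done.
Qed.

Lemma phi_derive (m t : R) : is_derive t 1 (phi m) (sg t * (1 - sg t) - m).
Proof.
have d2 : is_derive t 1 (m \*: (@id R)) (m *: 1) := is_deriveZ m (is_derive_id t 1).
have d3 := is_deriveB (sg_derive t) d2.
have -> : phi m = sg - (m \*: (@id R)) by apply/funext => y; rewrite /phi.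
apply: is_derive_eq d3 _.
by rewrite /GRing.scale /= mulr1.
Qed.

Lemma phi_cont (m : R) : continuous (phi m).
Proof.
move=> t. have [+ _] := phi_derive m t.
by move=> /derivable1_diffP /differentiable_continuous.
Qed.

Lemma phi_d1 (m t : R) : derive1 (phi m) t = sg t * (1 - sg t) - m.
Proof. have := phi_derive m t; by rewrite derive1E => -[_ ->]. Qed.

Lemma phi_ndecr (m u w : R) : u <= w ->
  (forall t, u < t < w -> 0 <= sg t * (1 - sg t) - m) -> phi m u <= phi m w.
Proof.
move=> uw H.
apply: (@ger0_derive1_ndecr R (phi m) u w) => //.
- by move=> x _; case: (phi_derive m x).
- by move=> x; rewrite in_itv /= phi_d1 => /H.
- by apply: continuous_subspaceT => x; apply: phi_cont.
Qed.

Lemma phi_nincr (m u w : R) : u <= w ->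
  (forall t, u < t < w -> sg t * (1 - sg t) - m <= 0) -> phi m w <= phi m u.
Proof.
move=> uw H.
apply: (@ler0_derive1_nincr R (phi m) u w) => //.
- by move=> x _; case: (phi_derive m x).
- by move=> x; rewrite in_itv /= phi_d1 => /H.
- by apply: continuous_subspaceT => x; apply: phi_cont.
Qed.

Lemma sg_le (u w : R) : u <= w -> sg u <= sg w.
Proof.
move=> uw; rewrite /sg lef_pV2 ?posrE ?ltr_pwDl ?expR_gt0 //.
by rewrite lerD2l ler_expR lerN2.
Qed.

Lemma key_big (m t0 t : R) : 1/4 <= m -> t0 <= t -> phi m t <= phi m t0.
Proof.
move=> hm ht; apply: phi_nincr => // z _.
have := sqr_ge0 (sg z - 1/2). nra.
Qed.

Lemma key_up (m s ts u w : R) : 0 <= s -> m = (1 - s^+2)/4 -> sg ts = (1+s)/2 ->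
  u <= w -> w <= ts -> (1 - s)/2 <= sg u -> phi m u <= phi m w.
Proof.
move=> s0 -> hts uw wts hu; apply: phi_ndecr => // z /andP[uz zw].
have h1 : sg u <= sg z by apply: sg_le; apply: ltW.
have h2 : sg z <= (1+s)/2 by rewrite -hts; apply: sg_le; apply: ltW; apply: lt_le_trans wts.
nra.
Qed.

Lemma key_small (m s ts t0 t : R) : 0 <= s -> m = (1 - s^+2)/4 -> sg ts = (1+s)/2 ->
  t0 <= t -> phi m t <= Num.max (phi m t0) (phi m ts).
Proof.
move=> s0 hm hts t0t.
case: (lerP ts t) => tst.
  rewrite le_max; apply/orP; right.
  apply: phi_nincr => // z /andP[tz zt].
  have h1 : (1+s)/2 <= sg z by rewrite -hts; apply: sg_le; apply: ltW.
  rewrite hm. nra.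
case: (lerP (sg t) ((1-s)/2)) => hst.
  rewrite le_max; apply/orP; left.
  apply: phi_nincr => // z /andP[tz zt].
  have h1 : sg z <= (1-s)/2 by apply: le_trans hst; apply: sg_le; apply: ltW.
  rewrite hm. nra.
rewrite le_max; apply/orP; right.
exact: (@key_up m s ts t ts s0 hm hts (ltW tst) (lexx ts) (ltW hst)).
Qed.


Lemma Omg_bounds (a b : R) : 0 < a -> 0 < b -> 0 < Omg a b /\ Omg a b < 1/2.
Proof.
move=> a0 b0; rewrite /Omg.
have e1 : 1 < expR (a * b) by rewrite expR_gt1 mulr_gt0.
split; first by rewrite invr_gt0; lra.
have -> : 1/2 = (2:R)^-1 by rewrite mul1r. rewrite ltf_pV2 ?posrE; lra.
Qed.

Lemma Psi_sg (a b x v rho : R) : Psi a b x v rho = sg (a * (x * (rho * v) - b)).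
Proof. by rewrite /Psi /sg; congr ((1 + expR (- (a * (_ - b))))^-1); ring. Qed.

Lemma rate_split (s2 x p rho : R) : rate s2 x p rho = rate s2 x ((1 - rho) * p) 0.
Proof. by rewrite /rate; congr (ln (1 + _ / s2)); ring. Qed.

Lemma QNL_split (a b Ps T x p rho : R) : QNL a b Ps T x p rho = QNL a b Ps T x (rho * p) 1.
Proof. by rewrite /QNL !Psi_sg mul1r. Qed.


Definition Kc (a b Ps T lam : R) := lam * Ps * T / (1 - Omg a b).
Definition mc (a b Ps T lam mu x : R) := mu * Zf a b Ps T x / lam.

Lemma g_eq (a b Ps T lam mu x v : R) : 0 < a -> 0 < b -> 0 < Ps -> 0 < T ->
  0 < lam -> 0 < x ->
  lam * QNL a b Ps T x v 1 - mu * v =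
  Kc a b Ps T lam * phi (mc a b Ps T lam mu x) (a * (x * v - b))
   - (Kc a b Ps T lam * Omg a b + mu * b / x).
Proof.
move=> a0 b0 P0 T0 l0 x0.
have [Op Ol] := Omg_bounds a b a0 b0.
rewrite /QNL Psi_sg mul1r /Kc /phi /mc /Zf.
set S := sg _.
field.
rewrite !gt_eqF // ?subr_gt0; lra.
Qed.


Lemma QNL0 (a b Ps T x : R) : QNL a b Ps T x 0 1 = 0.
Proof.
rewrite /QNL Psi_sg /sg /Omg !(mulr0, mul1r) sub0r mulrN opprK.
by rewrite subrr mulr0 mul0r.
Qed.

Section PAfacts.
Variables (a b Ps T lam mu x : R).
Hypotheses (a0 : 0 < a) (b0 : 0 < b) (P0 : 0 < Ps) (T0 : 0 < T) (l0 : 0 < lam)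
  (m0 : 0 < mu) (x0 : 0 < x).

Let m := mc a b Ps T lam mu x.
Let s : R := Num.sqrt (1 - 4 * m).

Lemma mc_pos : 0 < m.
Proof.
have [Op Ol] := Omg_bounds a b a0 b0.
rewrite /m /mc /Zf; apply: divr_gt0 => //; apply: mulr_gt0 => //.
apply: divr_gt0; first lra.
by rewrite !mulr_gt0.
Qed.

Lemma mc_x1 : 4 * m * x = x1 a b Ps T lam mu.
Proof.
have [Op Ol] := Omg_bounds a b a0 b0.
rewrite /m /mc /Zf /x1; field.
by rewrite !gt_eqF.
Qed.

Lemma mc_x2 : m * x = Omg a b * (1 - Omg a b) * x2 a b Ps T lam mu.
Proof.
have [Op Ol] := Omg_bounds a b a0 b0.
rewrite /m /mc /Zf /x2; field.
rewrite !gt_eqF //; lra.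
Qed.

Lemma s_ge0 : 0 <= s.
Proof. exact: sqrtr_ge0. Qed.

Lemma s_lt1 : s < 1.
Proof.
have := mc_pos => mp.
have s0 := s_ge0.
case: (lerP 0 (1 - 4 * m)) => h.
  have := sqr_sqrtr h; rewrite -/s => e; nra.
by rewrite /s ltr0_sqrtr.
Qed.

Lemma s_m : m <= 1/4 -> m = (1 - s^+2)/4.
Proof. move=> hm; rewrite /s sqr_sqrtr; lra. Qed.

Lemma PA_eq : a * (x * PA a b Ps T lam mu x - b) = - ln ((1 - s) / (1 + s)).
Proof.
rewrite /PA.
have -> : 1 - 4 * mu * Zf a b Ps T x / lam = 1 - 4 * m by rewrite /m /mc; ring.
rewrite -/s.
have s0 := s_ge0.
have -> : 2 / (1 + s) - 1 = (1 - s) / (1 + s) by field; lra.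
field; rewrite !gt_eqF //.
Qed.

Lemma sg_PA : sg (a * (x * PA a b Ps T lam mu x - b)) = (1 + s) / 2.
Proof.
rewrite PA_eq /sg opprK lnK; last first.
  by rewrite posrE; apply: divr_gt0; have := s_lt1; have := s_ge0; lra.
have := s_lt1; have := s_ge0 => s0 s1.
field; lra.
Qed.

Lemma PA_pos : 0 < PA a b Ps T lam mu x.
Proof.
rewrite /PA; apply: mulr_gt0; first by rewrite invr_gt0.
have -> : 1 - 4 * mu * Zf a b Ps T x / lam = 1 - 4 * m by rewrite /m /mc; ring.
rewrite -/s.
have s0 := s_ge0.
have : ln (2 / (1 + s) - 1) <= 0.
  apply: ln_le0.
  have : 2 / (1 + s) <= 2 by rewrite ler_pdivrMr; lra.
  lra.
have : 0 < a^-1 by rewrite invr_gt0.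
move=> h1 h2; have : 0 <= - a^-1 * ln (2 / (1 + s) - 1) by rewrite mulNr -mulrN mulr_ge0 ?oppr_ge0 // ltW.
move=> h3; exact: (ltr_wpDl h3 b0).
Qed.

End PAfacts.


Lemma EH_opt (a b Ps T lam mu x v : R) : 0 < a -> 0 < b -> 0 < Ps -> 0 < T ->
  0 < lam -> 0 < mu -> 0 < x -> 0 <= v ->
  lam * QNL a b Ps T x v 1 - mu * v <=
  lam * QNL a b Ps T x (PEH a b Ps T lam mu x) 1 - mu * PEH a b Ps T lam mu x.
Proof.
move=> a0 b0 P0 T0 l0 m0 x0 v0.
have [Op Ol] := Omg_bounds a b a0 b0.
have K0 : 0 < Kc a b Ps T lam by rewrite /Kc divr_gt0 ?mulr_gt0 //; lra.
have gE := @g_eq a b Ps T lam mu x _ a0 b0 P0 T0 l0 x0.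
rewrite !gE lerD2r ler_pM2l //.
set m := mc a b Ps T lam mu x.
have mp : 0 < m by apply: mc_pos.
have mx1 : 4 * m * x = x1 a b Ps T lam mu by apply: mc_x1.
have mx2 : m * x = Omg a b * (1 - Omg a b) * x2 a b Ps T lam mu by apply: mc_x2.
have tv : a * (x * 0 - b) <= a * (x * v - b).
  by rewrite ler_pM2l // lerD2r mulr0 mulr_ge0 // ltW.
have g0 : 0 = Kc a b Ps T lam * phi m (a * (x * 0 - b)) -
      (Kc a b Ps T lam * Omg a b + mu * b / x) by rewrite -gE QNL0 !mulr0 subr0.
rewrite /PEH; case: ifP => hx1.
  apply: key_big tv.
  rewrite -mx1 in hx1. nra.
have m4 : m < 1/4 by move/negbT: hx1; rewrite -ltNge -mx1 => hx1; nra.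
have sm := s_m a b Ps T lam mu x (ltW m4); rewrite -/m in sm.
have s0 : 0 <= Num.sqrt (1 - 4 * m) by apply: sqrtr_ge0.
have sgP : sg (a * (x * PA a b Ps T lam mu x - b)) = (1 + Num.sqrt (1 - 4 * m)) / 2 by apply: sg_PA.
have ks := key_small _ _ _ _ _ s0 sm sgP tv.
have gP := gE (PA a b Ps T lam mu x).
case: ifP => hx2.
  case: ifP => hc.
    apply: (le_trans ks); rewrite ge_max lexx andbT.
    rewrite -subr_gt0 in hc.
    rewrite -(ler_pM2l K0).
    have : 0 < Kc a b Ps T lam * phi m (a * (x * PA a b Ps T lam mu x - b)) -
      (Kc a b Ps T lam * Omg a b + mu * b / x) by rewrite -gP.
    lra.
  apply: (le_trans ks); rewrite ge_max lexx /=.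
  move/negbT: hc; rewrite -leNgt -subr_ge0 => hc.
  rewrite -(ler_pM2l K0).
  have : 0 <= - (Kc a b Ps T lam * phi m (a * (x * PA a b Ps T lam mu x - b)) -
      (Kc a b Ps T lam * Omg a b + mu * b / x)) by rewrite -gP opprB.
  lra.
apply: (le_trans ks); rewrite ge_max lexx andbT.
set sq := Num.sqrt (1 - 4 * m) in s0 sm sgP ks *.
have sg0 : sg (a * (x * 0 - b)) = Omg a b.
  by rewrite /sg /Omg mulr0 sub0r mulrN opprK.
have mO : m <= Omg a b * (1 - Omg a b).
  move/negbT: hx2; rewrite -leNgt => hx2.
  have : 0 < Omg a b * (1 - Omg a b) by apply: mulr_gt0; lra.
  nra.
apply: (key_up _ _ _ _ _ s0 sm sgP) => //.
  rewrite leNgt; apply/negP => hlt.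
  have := sg_le _ _ (ltW hlt); rewrite sgP sg0.
  lra.
rewrite sg0.
rewrite sm in mO.
nra.
Qed.


Lemma ID_opt (s2 mu x u : R) : 0 < s2 -> 0 < mu -> 0 < x -> 0 <= u ->
  rate s2 x u 0 - mu * u <= rate s2 x (PID s2 mu x) 0 - mu * PID s2 mu x.
Proof.
move=> s0 m0 x0 u0.
rewrite /rate subr0 !mul1r.
have PIDge0 : 0 <= PID s2 mu x by rewrite /PID le_max lexx orbT.
set B := 1 + x * PID s2 mu x / s2.
set A := 1 + x * u / s2.
have B0 : 0 < B by rewrite /B ltr_pwDl // divr_ge0 ?mulr_ge0 // ltW.
have A0 : 0 < A by rewrite /A ltr_pwDl // divr_ge0 ?mulr_ge0 // ltW.
have H1 : ln A - ln B <= A / B - 1.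
  rewrite -ln_div ?posrE //.
  have := @le_ln1Dx R (A / B - 1).
  have -> : 1 + (A / B - 1) = A / B by ring.
  apply.
  have : 0 < A / B by apply: divr_gt0.
  lra.
suff H2 : A / B - 1 <= mu * (u - PID s2 mu x) by lra.
move: B0; rewrite /B.
case: (leP (mu^-1 - s2 / x) 0) => hc B0.
  have hmax : PID s2 mu x = 0 by rewrite /PID; apply/max_idPr.
  rewrite hmax !mulr0 mul0r addr0 divr1 subr0 /A addrC addKr.
  have : x / s2 <= mu.
    have : mu^-1 <= s2 / x by lra.
    rewrite -(invf_div x s2) lef_pV2 ?posrE ?divr_gt0 //.
  move=> h; rewrite mulrAC; apply: ler_wpM2r => //.
have hmax : PID s2 mu x = mu^-1 - s2 / x by rewrite /PID; apply/max_idPl; apply: ltW.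
rewrite hmax /A.
rewrite le_eqVlt; apply/orP; left; apply/eqP.
field.
rewrite !gt_eqF //.
Qed.


Section Cand.
Variables (a b Ps T s2 lam mu x : R).
Hypotheses (a0 : 0 < a) (b0 : 0 < b) (P0 : 0 < Ps) (T0 : 0 < T) (s0 : 0 < s2)
  (l0 : 0 < lam) (m0 : 0 < mu) (x0 : 0 < x).

Lemma PID_ge0 : 0 <= PID s2 mu x.
Proof. by rewrite /PID le_max lexx orbT. Qed.

Lemma PEH_ge0 : 0 <= PEH a b Ps T lam mu x.
Proof.
have := PA_pos a b Ps T lam mu x a0 b0 x0 => /ltW h.
by rewrite /PEH; repeat case: ifP => _ //.
Qed.

Lemma Pcand_ge0 : 0 <= Pcand a b Ps T s2 lam mu x.
Proof. by rewrite /Pcand addr_ge0 // ?PID_ge0 ?PEH_ge0. Qed.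

Lemma rho_bounds : 0 <= rhocand a b Ps T s2 lam mu x <= 1.
Proof.
rewrite /rhocand; case: ifP => [_|/negbT hP]; first by rewrite lexx ler01.
have := PID_ge0; have := PEH_ge0; have := Pcand_ge0.
rewrite /Pcand in hP * => h1 h2 h3.
have hp : 0 < PID s2 mu x + PEH a b Ps T lam mu x by rewrite lt_def hP.
rewrite divr_ge0 //= ler_pdivrMr // mul1r; lra.
Qed.

Lemma cand_split :
  (1 - rhocand a b Ps T s2 lam mu x) * Pcand a b Ps T s2 lam mu x = PID s2 mu x /\
  rhocand a b Ps T s2 lam mu x * Pcand a b Ps T s2 lam mu x = PEH a b Ps T lam mu x.
Proof.
have := PID_ge0; have := PEH_ge0 => h1 h2.
rewrite /rhocand; case: ifP => [/eqP hP|/negbT hP].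
  rewrite hP !mulr0; rewrite /Pcand in hP; split; lra.
split; last by rewrite divfK.
rewrite mulrBl mul1r divfK // /Pcand; ring.
Qed.

Lemma pointwise (p rho : R) : 0 <= p -> 0 <= rho <= 1 ->
  rate s2 x p rho + lam * QNL a b Ps T x p rho + mu * Pcand a b Ps T s2 lam mu x <=
  rate s2 x (Pcand a b Ps T s2 lam mu x) (rhocand a b Ps T s2 lam mu x)
  + lam * QNL a b Ps T x (Pcand a b Ps T s2 lam mu x) (rhocand a b Ps T s2 lam mu x)
  + mu * p.
Proof.
move=> p0 /andP[r0 r1].
rewrite (rate_split _ _ p) (QNL_split _ _ _ _ _ p) (rate_split _ _ (Pcand _ _ _ _ _ _ _ _)).
rewrite (QNL_split _ _ _ _ _ (Pcand _ _ _ _ _ _ _ _)).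
have [-> ->] := cand_split.
have hu : 0 <= (1 - rho) * p by rewrite mulr_ge0 // subr_ge0.
have hv : 0 <= rho * p by rewrite mulr_ge0.
have HA := ID_opt _ _ _ _ s0 m0 x0 hu.
have HB := EH_opt _ _ _ _ _ _ _ _ a0 b0 P0 T0 l0 m0 x0 hv.
rewrite /Pcand.
have -> : mu * p = mu * ((1 - rho) * p) + mu * (rho * p) by ring.
lra.
Qed.

End Cand.


Lemma rate_ge0 (s2 x p rho : R) : 0 < s2 -> 0 <= x -> 0 <= p -> rho <= 1 ->
  0 <= rate s2 x p rho.
Proof.
move=> s0 x0 p0 r1; rewrite /rate; apply: ln_ge0.
by rewrite lerDl divr_ge0 ?mulr_ge0 ?subr_ge0 // ltW.
Qed.

Lemma QNL_ge0 (a b Ps T x p rho : R) : 0 < a -> 0 < b -> 0 < Ps -> 0 < T ->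
  0 <= x -> 0 <= p -> 0 <= rho -> 0 <= QNL a b Ps T x p rho.
Proof.
move=> a0 b0 P0 T0 x0 p0 r0.
have [Op Ol] := Omg_bounds a b a0 b0.
rewrite /QNL Psi_sg; apply: divr_ge0; last lra.
apply: mulr_ge0; first by rewrite mulr_ge0 // ltW.
rewrite subr_ge0.
have -> : Omg a b = sg (a * (x * 0 - b)) by rewrite /sg /Omg mulr0 sub0r mulrN opprK.
apply: sg_le; rewrite ler_pM2l // lerD2r mulr0 mulr_ge0 // mulr_ge0 //.
Qed.

End S.

Section M.
Context {R : realType}.

Lemma measurable_inv : measurable_fun [set: R] (fun x : R => x^-1).
Proof.
have -> : (fun x : R => x^-1) = (fun x => if x == 0 then 0 else x^-1).
  by apply/funext => x; case: eqP => // ->; rewrite invr0.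
apply: measurable_fun_if => //.
- by apply: measurable_fun_eqr.
- rewrite setTI.
  have -> : (fun x : R => x == 0) @^-1` [set false] = [set x | x != 0].
    by apply/seteqP; split => x /=; case: (x == 0).
  apply: open_continuous_measurable_fun; first exact: open_neq.
  by move=> x; rewrite inE => x0; apply: inv_continuous.
Qed.

Lemma measurable_sg : measurable_fun [set: R] (@sg R).
Proof.
apply: continuous_measurable_fun => t.
have [+ _] := sg_derive t.
by move=> /derivable1_diffP /differentiable_continuous.
Qed.


Lemma mcst (k : R) : measurable_fun [set: R] (fun _ : R => k).
Proof. exact: measurable_cst. Qed.

Lemma mid : measurable_fun [set: R] (fun x : R => x).
Proof. exact: measurable_id. Qed.

Lemma mD (f g : R -> R) : measurable_fun [set: R] f -> measurable_fun [set: R] g ->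
  measurable_fun [set: R] (fun x => f x + g x).
Proof. exact: measurable_funD. Qed.
Lemma mB (f g : R -> R) : measurable_fun [set: R] f -> measurable_fun [set: R] g ->
  measurable_fun [set: R] (fun x => f x - g x).
Proof. exact: measurable_funB. Qed.
Lemma mM (f g : R -> R) : measurable_fun [set: R] f -> measurable_fun [set: R] g ->
  measurable_fun [set: R] (fun x => f x * g x).
Proof. exact: measurable_funM. Qed.
Lemma mN (f : R -> R) : measurable_fun [set: R] f ->
  measurable_fun [set: R] (fun x => - f x).
Proof. exact: measurable_funN. Qed.
Lemma mV (f : R -> R) : measurable_fun [set: R] f ->
  measurable_fun [set: R] (fun x => (f x)^-1).
Proof. by move=> mf; apply: (measurableT_comp measurable_inv mf). Qed.
Lemma mln (f : R -> R) : measurable_fun [set: R] f ->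
  measurable_fun [set: R] (fun x => ln (f x)).
Proof. by move=> mf; apply: (measurableT_comp (@measurable_ln R) mf). Qed.
Lemma msqrt (f : R -> R) : measurable_fun [set: R] f ->
  measurable_fun [set: R] (fun x => Num.sqrt (f x)).
Proof.
move=> mf; apply: (measurableT_comp _ mf).
apply: continuous_measurable_fun; exact: sqrt_continuous.
Qed.
Lemma msg (f : R -> R) : measurable_fun [set: R] f ->
  measurable_fun [set: R] (fun x => sg (f x)).
Proof. by move=> mf; apply: (measurableT_comp measurable_sg mf). Qed.
Lemma mmax (f g : R -> R) : measurable_fun [set: R] f -> measurable_fun [set: R] g ->
  measurable_fun [set: R] (fun x => Num.max (f x) (g x)).
Proof. exact: measurable_maxr. Qed.
Lemma mif (c : R -> bool) (f g : R -> R) : measurable_fun [set: R] c ->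
  measurable_fun [set: R] f -> measurable_fun [set: R] g ->
  measurable_fun [set: R] (fun x => if c x then f x else g x).
Proof. by move=> mc mf mg; apply: measurable_fun_ifT. Qed.
Lemma mle (f g : R -> R) : measurable_fun [set: R] f -> measurable_fun [set: R] g ->
  measurable_fun [set: R] (fun x => f x <= g x).
Proof. exact: measurable_fun_ler. Qed.
Lemma mlt (f g : R -> R) : measurable_fun [set: R] f -> measurable_fun [set: R] g ->
  measurable_fun [set: R] (fun x => f x < g x).
Proof. exact: measurable_fun_ltr. Qed.
Lemma meq (f g : R -> R) : measurable_fun [set: R] f -> measurable_fun [set: R] g ->
  measurable_fun [set: R] (fun x => f x == g x).
Proof. exact: measurable_fun_eqr. Qed.

Lemma mexp (f : R -> R) : measurable_fun [set: R] f ->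
  measurable_fun [set: R] (fun x => expR (f x)).
Proof. by move=> mf; apply: (measurableT_comp (@measurable_expR R) mf). Qed.

Ltac mtac := repeat first [ assumption | apply: mD | apply: mB | apply: mM | apply: mN | apply: mV
  | apply: mln | apply: msqrt | apply: msg | apply: mmax | apply: mif | apply: mle
  | apply: mlt | apply: meq | exact: mid | exact: mcst ].

Variables (a b Ps T s2 lam mu : R).

Lemma mPID : measurable_fun [set: R] (PID s2 mu).
Proof. rewrite /PID /=. mtac. Qed.

Lemma mPA : measurable_fun [set: R] (PA a b Ps T lam mu).
Proof. rewrite /PA /Zf /=. mtac. Qed.

Lemma mQ1 (f : R -> R) : measurable_fun [set: R] f ->
  measurable_fun [set: R] (fun x => QNL a b Ps T x (f x) 1).
Proof.
move=> mf.
have -> : (fun x => QNL a b Ps T x (f x) 1) =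
   (fun x => Ps * T * (sg (a * (x * (1 * f x) - b)) - Omg a b) / (1 - Omg a b)).
  by apply/funext => x; rewrite /QNL Psi_sg.
apply: mM; [|by mtac]. apply: mM; [by mtac|]. apply: mB; [|by mtac]. apply: msg. mtac.
Qed.


Lemma mPEH : measurable_fun [set: R] (PEH a b Ps T lam mu).
Proof.
rewrite /PEH.
apply: mif; [by mtac | exact: mcst |].
apply: mif; [by mtac | | exact: mPA].
apply: mif; [| exact: mPA | exact: mcst].
apply: mlt; apply: mM; try exact: mcst; try exact: mPA.
apply: mQ1; exact: mPA.
Qed.

Lemma mPcand : measurable_fun [set: R] (Pcand a b Ps T s2 lam mu).
Proof. rewrite /Pcand; apply: mD; [exact: mPID | exact: mPEH]. Qed.

Lemma mrho : measurable_fun [set: R] (rhocand a b Ps T s2 lam mu).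
Proof.
rewrite /rhocand.
apply: mif; [apply: meq; [exact: mPcand | exact: mcst] | exact: mcst |].
apply: mM; [exact: mPEH | apply: mV; exact: mPcand].
Qed.

End M.

Section I.
Context {R : realType} {d : measure_display} {T : measurableType d}.
Variable (mu0 : {measure set T -> \bar R}).

Lemma mEF (F : T -> R) : measurable_fun setT F -> measurable_fun setT (fun x => (F x)%:E).
Proof. by move=> mF; apply: measurableT_comp. Qed.

Ltac side := first [ by move=> x _; rewrite -?EFinM -?EFinD lee_fin ?addr_ge0 ?mulr_ge0
  | (under eq_fun do rewrite -?EFinM -?EFinD); apply: mEF;
    repeat first [assumption | apply: measurable_funD | apply: measurable_funM | exact: measurable_cst] ].

Lemma int_lin3 (f g k : T -> R) (c1 c2 : R) : 0 <= c1 -> 0 <= c2 ->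
  measurable_fun setT f -> measurable_fun setT g -> measurable_fun setT k ->
  (forall x, 0 <= f x) -> (forall x, 0 <= g x) -> (forall x, 0 <= k x) ->
  (\int[mu0]_x (f x + c1 * g x + c2 * k x)%:E =
   \int[mu0]_x (f x)%:E + c1%:E * \int[mu0]_x (g x)%:E + c2%:E * \int[mu0]_x (k x)%:E)%E.
Proof.
move=> c10 c20 mf mg mk f0 g0 k0.
under eq_integral => x _ do rewrite EFinD EFinD EFinM EFinM.
rewrite ge0_integralD //; try side.
rewrite ge0_integralD //; try side.
rewrite ge0_integralZl_EFin //; try side.
rewrite ge0_integralZl_EFin //; try side.
Qed.


Lemma int_ineq (r q pc rc qc pp : T -> R) (lam mu Q Pavg : R) :
  0 < lam -> 0 < mu -> 0 <= Q ->
  measurable_fun setT r -> measurable_fun setT q -> measurable_fun setT pc ->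
  measurable_fun setT rc -> measurable_fun setT qc -> measurable_fun setT pp ->
  (forall x, 0 <= r x) -> (forall x, 0 <= q x) -> (forall x, 0 <= pc x) ->
  (forall x, 0 <= rc x) -> (forall x, 0 <= qc x) -> (forall x, 0 <= pp x) ->
  (forall x, r x + lam * q x + mu * pc x <= rc x + lam * qc x + mu * pp x) ->
  (Q%:E <= \int[mu0]_x (q x)%:E)%E -> (\int[mu0]_x (qc x)%:E = Q%:E)%E ->
  (\int[mu0]_x (pc x)%:E = Pavg%:E)%E -> (\int[mu0]_x (pp x)%:E <= Pavg%:E)%E ->
  (\int[mu0]_x (r x)%:E <= \int[mu0]_x (rc x)%:E)%E.
Proof.
move=> l0 m0 Q0 mr mq mpc mrc mqc mpp r0 q0 pc0 rc0 qc0 pp0 H hq hqc hpc hpp.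
have H2 : (\int[mu0]_x (r x + lam * q x + mu * pc x)%:E <=
           \int[mu0]_x (rc x + lam * qc x + mu * pp x)%:E)%E.
  apply: ge0_le_integral => //.
  - by move=> x _; rewrite lee_fin !addr_ge0 ?mulr_ge0 // ltW.
  - apply: mEF; apply: measurable_funD; [apply: measurable_funD|] => //;
      apply: measurable_funM => //; exact: measurable_cst.
  - apply: mEF; apply: measurable_funD; [apply: measurable_funD|] => //;
      apply: measurable_funM => //; exact: measurable_cst.
  - by move=> x _; rewrite lee_fin.
have l0w := ltW l0; have m0w := ltW m0.
rewrite !int_lin3 // hqc hpc in H2.
set Ir := (\int[mu0]_x (r x)%:E)%E in H2 *.
set Irc := (\int[mu0]_x (rc x)%:E)%E in H2 *.
set Iq := (\int[mu0]_x (q x)%:E)%E in H2 hq.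
set Ipp := (\int[mu0]_x (pp x)%:E)%E in H2 hpp.
have Hq : (lam%:E * Q%:E <= lam%:E * Iq)%E.
  by apply: lee_pmul; rewrite ?lee_fin.
have Hp : (mu%:E * Ipp <= mu%:E * Pavg%:E)%E.
  apply: lee_pmul; rewrite ?lee_fin //.
  by apply: integral_ge0 => x _; rewrite lee_fin.
have H3 : (Ir + (lam * Q + mu * Pavg)%:E <= Irc + (lam * Q + mu * Pavg)%:E)%E.
  rewrite EFinD !EFinM !addeA.
  apply: le_trans (le_trans H2 _).
    by apply: leeD2r; apply: leeD2l.
  by apply: leeD2l.
by rewrite leeD2rE in H3.
Qed.


Ltac mt2 := repeat first [ assumption | apply: measurable_funD | apply: measurable_funB
  | apply: measurable_funM | apply: measurable_funN | exact: measurable_cst ].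

Lemma mrateT (s2 : R) (fx fp fr : T -> R) : measurable_fun setT fx ->
  measurable_fun setT fp -> measurable_fun setT fr ->
  measurable_fun setT (fun w => rate s2 (fx w) (fp w) (fr w)).
Proof.
move=> mx mp mr; rewrite /rate.
have H : measurable_fun setT (fun x : T => 1 + (1 - fr x) * fx x * fp x / s2) by mt2.
exact: (measurableT_comp (@measurable_ln R) H).
Qed.

Lemma mQNLT (a b Ps T0 : R) (fx fp fr : T -> R) : measurable_fun setT fx ->
  measurable_fun setT fp -> measurable_fun setT fr ->
  measurable_fun setT (fun w => QNL a b Ps T0 (fx w) (fp w) (fr w)).
Proof.
move=> mx mp mr.
have -> : (fun w => QNL a b Ps T0 (fx w) (fp w) (fr w)) =
  (fun w => Ps * T0 * (sg (a * (fx w * (fr w * fp w) - b)) - Omg a b) / (1 - Omg a b)).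
  by apply/funext => w; rewrite /QNL Psi_sg.
apply: measurable_funM; [|exact: measurable_cst].
apply: measurable_funM; [exact: measurable_cst|].
apply: measurable_funB; [|exact: measurable_cst].
have H : measurable_fun setT (fun w => a * (fx w * (fr w * fp w) - b)) by mt2.
exact: (measurableT_comp measurable_sg H).
Qed.

End I.

Theorem lemma5 (R : realType) (d : measure_display) (Ox : measurableType d)
    (P : probability Ox R) (h U : Ox -> R)
    (a b Ps T sigma2 Pavg Q lam mu : R) :
  0 < a -> 0 < b -> 0 < Ps -> 0 < T -> 0 < sigma2 -> 0 < Pavg -> 0 <= Q ->
  fading_model P h U ->
  (exists p rho, feasible a b Ps T Pavg Q P h U p rho) ->
  0 < lam -> 0 < mu ->
  Efad P h U (fun s => QNL a b Ps T s.1 (Pcand a b Ps T sigma2 lam mu s.1)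
                                      (rhocand a b Ps T sigma2 lam mu s.1)) = Q%:E ->
  Efad P h U (fun s => Pcand a b Ps T sigma2 lam mu s.1) = Pavg%:E ->
  feasible a b Ps T Pavg Q P h U (fun s => Pcand a b Ps T sigma2 lam mu s.1)
                                 (fun s => rhocand a b Ps T sigma2 lam mu s.1) /\
  forall p rho : R * R -> R, feasible a b Ps T Pavg Q P h U p rho ->
    (Efad P h U (fun s => rate sigma2 s.1 (p s) (rho s)) <=
     Efad P h U (fun s => rate sigma2 s.1 (Pcand a b Ps T sigma2 lam mu s.1)
                                          (rhocand a b Ps T sigma2 lam mu s.1)))%E.
Proof.
move=> a0 b0 P0 T0 s0 Pav0 Q0 [mh mU hpos hint _] _ l0 m0 hQc hPc.
have mPc : measurable_fun setT (Pcand a b Ps T sigma2 lam mu) by apply: mPcand.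
have mrc : measurable_fun setT (rhocand a b Ps T sigma2 lam mu) by apply: mrho.
have mpair : measurable_fun setT (fun w => (h w, U w)) by exact: measurable_fun_pair.
split.
  split.
  - split; [exact: (measurableT_comp mPc measurable_fst)|exact: (measurableT_comp mrc measurable_fst)].
  - by move=> w /=; apply: Pcand_ge0 => //; apply: hpos.
  - by move=> w /=; apply: rho_bounds => //; apply: hpos.
  - by rewrite hQc.
  - by rewrite hPc.
move=> p rho [[mp mrho] p0 rho01 hq hp].
rewrite /Efad /= in hq hp hQc hPc *.
have mpw : measurable_fun setT (fun w => p (h w, U w)) by exact: measurableT_comp mp mpair.
have mrw : measurable_fun setT (fun w => rho (h w, U w)) by exact: measurableT_comp mrho mpair.
have mPcw : measurable_fun setT (fun w => Pcand a b Ps T sigma2 lam mu (h w)) by exact: measurableT_comp mPc mh.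
have mrcw : measurable_fun setT (fun w => rhocand a b Ps T sigma2 lam mu (h w)) by exact: measurableT_comp mrc mh.
apply: (@int_ineq _ _ _ P
  (fun w => rate sigma2 (h w) (p (h w, U w)) (rho (h w, U w)))
  (fun w => QNL a b Ps T (h w) (p (h w, U w)) (rho (h w, U w)))
  (fun w => Pcand a b Ps T sigma2 lam mu (h w))
  (fun w => rate sigma2 (h w) (Pcand a b Ps T sigma2 lam mu (h w)) (rhocand a b Ps T sigma2 lam mu (h w)))
  (fun w => QNL a b Ps T (h w) (Pcand a b Ps T sigma2 lam mu (h w)) (rhocand a b Ps T sigma2 lam mu (h w)))
  (fun w => p (h w, U w)) lam mu Q Pavg) => //.
- by apply: mrateT.
- by apply: mQNLT.
- by apply: mrateT.
- by apply: mQNLT.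
- move=> w; apply: rate_ge0 => //; [exact: ltW | by case/andP: (rho01 w)].
- move=> w; apply: QNL_ge0 => //; [exact: ltW | by case/andP: (rho01 w)].
- by move=> w; apply: Pcand_ge0 => //; apply: hpos.
- move=> w; apply: rate_ge0 => //; [exact: ltW | by apply: Pcand_ge0 | by case/andP: (rho_bounds a b Ps T sigma2 lam mu (h w) a0 b0 (hpos w))].
- move=> w; apply: QNL_ge0 => //; [exact: ltW | by apply: Pcand_ge0 | by case/andP: (rho_bounds a b Ps T sigma2 lam mu (h w) a0 b0 (hpos w))].
- by move=> w; apply: pointwise.
Qed.
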